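(* Let $D_{\hat 1},D_{\hat 2},D_{\hat 3},D_{\hat 4}$ be positive real numbers (with $D_{\hat i}$ standing for $D_{[4]\setminus\{i\}}$, $[4]=\{1,2,3,4\}$). There exists a positive-weighted (simple, finite) graph $\mathcal G=(G,w)$ with $[4]\subseteq V(G)$ such that $D_{\hat i}(\mathcal G)=D_{\hat i}$ for $i=1,2,3,4$ if and only if (i) $5D_{\hat t}\le 3D_{\hat k}+3D_{\hat j}+2D_{\hat i}$ for all pairwise distinct $i,j,k,t\in[4]$, and (ii) $D_{\hat i}<D_{\hat k}+D_{\hat j}$ for all pairwise distinct $i,j,k\in[4]$.
   Context: All graphs are simple and finite. A positive-weighted graph $\mathcal G=(G,w)$ is a graph $G$ with a function $w:E(G)\to\mathbb R_{>0}$; for a subgraph $G'$, $w(G')$ is the sum of the weights of the edges of $G'$. For distinct vertices $i_1,\dots,i_k$ of $G$, $D_{\{i_1,\dots,i_k\}}(\mathcal G)$ is the minimum of $w(R)$ over all connected subgraphs $R$ of $G$ whose vertex set contains $i_1,\dots,i_k$. We write $D_{\hat i}(\mathcal G)=D_{[4]\setminus\{i\}}(\mathcal G)$. The graph may have vertices other than $1,2,3,4$. *)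

(* Defs.v *)
From HB Require Import structures.
From mathcomp Require Import all_boot all_order all_algebra.
From mathcomp Require Import reals.
Set Implicit Arguments. Unset Strict Implicit. Unset Printing Implicit Defensive.
Import Order.TTheory GRing.Theory Num.Theory.
Local Open Scope ring_scope.

(* A simple finite graph G on vertex type T is a set E of edges, each edge
   being a 2-element subset of T.  A positive weighting is w : {set T} -> R
   with 0 < w e for every e in E. *)
Definition simple_edges (T : finType) (E : {set {set T}}) : bool :=
  [forall e in E, #|e| == 2%N].

Definition pos_weight (R : realType) (T : finType) (E : {set {set T}})
  (w : {set T} -> R) : bool := [forall e in E, 0 < w e].

Definition is_subgraph (T : finType) (E : {set {set T}})
  (VR : {set T}) (ER : {set {set T}}) : bool :=
  (ER \subset E) && [forall e in ER, e \subset VR].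

Definition adj (T : finType) (ER : {set {set T}}) : rel T :=
  fun x y => [set x; y] \in ER.

Definition sg_connected (T : finType) (VR : {set T}) (ER : {set {set T}}) : bool :=
  [forall x in VR, forall y in VR, connect (adj ER) x y].

Definition sg_weight (R : realType) (T : finType) (w : {set T} -> R)
  (ER : {set {set T}}) : R := \sum_(e in ER) w e.

(* steiner_dist E w S d  :<->  D_S(G,w) = d, i.e. d is the minimum of w(R)
   over connected subgraphs R of G whose vertex set contains S. *)
Definition steiner_dist (R : realType) (T : finType) (E : {set {set T}})
  (w : {set T} -> R) (S : {set T}) (d : R) : Prop :=
  (exists VR ER, [/\ is_subgraph E VR ER, sg_connected VR ER, S \subset VR
                   & sg_weight w ER = d]) /\
  (forall VR ER, is_subgraph E VR ER -> sg_connected VR ER -> S \subset VR ->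
                 d <= sg_weight w ER).

(* Main.v *)
Require Import Defs.
From HB Require Import structures.
From mathcomp Require Import all_boot all_order all_algebra.
From mathcomp Require Import reals.
From mathcomp Require Import lra.
Import Order.TTheory GRing.Theory Num.Theory.
Set Implicit Arguments. Unset Strict Implicit. Unset Printing Implicit Defensive.
Local Open Scope ring_scope.

Section Weights.
Variables (R : realType) (T : finType) (w : {set T} -> R).
Implicit Types A B : {set {set T}}.

Lemma sgw_sub A B : A \subset B -> (forall e, e \in B -> 0 <= w e) ->
  sg_weight w A <= sg_weight w B.
Proof.
move=> AB hB; rewrite /sg_weight [X in _ <= X](big_setID A) /=.
rewrite (setIidPr AB) lerDl; apply: sumr_ge0 => e; rewrite inE => /andP[_]; exact: hB.
Qed.

Lemma sgw_disj A B : [disjoint A & B] ->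
  sg_weight w (A :|: B) = sg_weight w A + sg_weight w B.
Proof.
move=> dAB; rewrite /sg_weight (big_setID A) /=.
have -> : (A :|: B) :&: A = A by apply/setIidPr; apply: subsetUl.
rewrite setDUl setDv set0U.
by rewrite (setDidPl _) // disjoint_sym.
Qed.

Lemma sgw_U A B : (forall e, e \in B -> 0 <= w e) ->
  sg_weight w (A :|: B) <= sg_weight w A + sg_weight w B.
Proof.
move=> hB; have -> : A :|: B = A :|: (B :\: A).
  by apply/setP => e; rewrite !inE; case: (e \in A); rewrite ?orbT.
rewrite sgw_disj ?lerD2l; first by apply: sgw_sub => //; apply: subsetDl.
by rewrite disjoint_sym; apply/setDidPl; apply/setP => e; rewrite !inE; case: (e \in A).
Qed.

Lemma sgw_pos A e : e \in A -> 0 < w e -> (forall e, e \in A -> 0 <= w e) ->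
  0 < sg_weight w A.
Proof.
move=> eA we hA; rewrite /sg_weight (bigD1 e) //=.
by apply: ltr_pwDl => //; apply: sumr_ge0 => e' /andP[/hA].
Qed.

End Weights.

Section Paths.
Variables (T : finType).

Fixpoint pedges (a : T) (p : seq T) : {set {set T}} :=
  if p is b :: p' then [set a; b] |: pedges b p' else set0.
Definition lv (a : T) (p : seq T) : {set T} := [set v | v \in a :: p].

Lemma adj_sym (ER : {set {set T}}) : symmetric (adj ER).
Proof. by move=> x y; rewrite /adj setUC. Qed.

Lemma conn_sym (ER : {set {set T}}) x y :
  connect (adj ER) x y = connect (adj ER) y x.
Proof. exact: (sym_connect_sym (adj_sym ER)). Qed.

Lemma conn_mono (A B : {set {set T}}) x y : A \subset B ->
  connect (adj A) x y -> connect (adj B) x y.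
Proof.
move=> AB; apply: connect_sub => u v huv; apply: connect1.
by rewrite /adj (subsetP AB).
Qed.

Lemma pedges_sub ER a p : path (adj ER) a p -> pedges a p \subset ER.
Proof.
elim: p a => [|b p IH] a /=; first by rewrite sub0set.
by case/andP=> hab hp; rewrite subUset sub1set IH // andbT.
Qed.

Lemma pedges_in a p e : e \in pedges a p -> e \subset lv a p.
Proof.
elim: p a => [|b p IH] a /=; first by rewrite inE.
rewrite in_setU1 => /orP[/eqP->|/IH sub].
  by apply/subsetP=> v; rewrite !inE => /orP[]->; rewrite ?orbT.
by apply: (subset_trans sub); apply/subsetP => v; rewrite !inE => ->; rewrite orbT.
Qed.

Lemma path_conn a p v : v \in a :: p -> connect (adj (pedges a p)) a v.
Proof.
elim: p a => [|b p IH] a /=; first by rewrite inE => /eqP->.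
rewrite inE => /orP[/eqP->|/IH h]; first by [].
apply: (connect_trans (y := b)); first by apply: connect1; rewrite /adj !inE eqxx.
by apply: conn_mono h; apply: subsetUr.
Qed.

Lemma lv_conn a p : sg_connected (lv a p) (pedges a p).
Proof.
apply/forallP => x; apply/implyP; rewrite inE => hx.
apply/forallP => y; apply/implyP; rewrite inE => hy.
apply: (connect_trans (y := a)); last exact: path_conn.
by rewrite conn_sym; apply: path_conn.
Qed.

Variable (R : realType).

Fixpoint pw (w : {set T} -> R) (a : T) (p : seq T) : R :=
  if p is b :: p' then w [set a; b] + pw w b p' else 0.

Lemma pw_weight (w : {set T} -> R) a p : uniq (a :: p) ->
  sg_weight w (pedges a p) = pw w a p.
Proof.
elim: p a => [|b p IH] a /=; first by move=> _; rewrite /sg_weight big_set0.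
case/andP => ha hu; rewrite /sg_weight big_setU1 /=; last first.
  apply/negP => /pedges_in /subsetP /(_ a); rewrite !inE eqxx /= => /(_ isT).
  by move=> hin; rewrite !inE hin in ha.
by have := IH b hu; rewrite /sg_weight => ->.
Qed.

Lemma pw_lip (E ER : {set {set T}}) (w : {set T} -> R) (phi : T -> R) a p :
  (forall u v, [set u; v] \in E -> phi v - phi u <= w [set u; v]) ->
  ER \subset E -> path (adj ER) a p ->
  phi (last a p) - phi a <= pw w a p /\ phi a - phi (last a p) <= pw w a p.
Proof.
move=> lip sub; elim: p a => [|b p IH] a /=; first by move=> _; rewrite subrr.
case/andP => hab /IH [h1 h2].
have hE : [set a; b] \in E by apply: (subsetP sub).
have l1 := lip _ _ hE.
have : [set b; a] \in E by rewrite setUC.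
move=> /lip; rewrite setUC => l2.
split; lra.
Qed.


Definition leg (ER : {set {set T}}) (c x a : T) (p : seq T) :=
  [/\ path (adj ER) a p, uniq (a :: p) &
      (a = c /\ last a p = x) \/ (a = x /\ last a p = c)].

Lemma first_hit (e : rel T) (A : pred T) z q : path e z q -> A (last z q) ->
  exists q3, [/\ path e z q3, A (last z q3) &
                forall v, v \in z :: q3 -> A v -> v = last z q3].
Proof.
elim: q z => [|b q IH] z /=.
  by move=> _ hz; exists [::]; split => // v; rewrite inE => /eqP.
case/andP => hzb hp hl.
case hAz: (A z).
  by exists [::]; split => // v; rewrite inE => /eqP.
have [q3 [p3 l3 u3]] := IH b hp hl.
exists (b :: q3); split => //=; first by rewrite hzb.
move=> v; rewrite inE => /orP[/eqP->|]; first by rewrite hAz.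
exact: u3.
Qed.

Lemma tripod ER VR x y z : sg_connected VR ER -> x \in VR -> y \in VR -> z \in VR ->
  exists c a1 p1 a2 p2 a3 p3,
    [/\ leg ER c x a1 p1, leg ER c y a2 p2, leg ER c z a3 p3 &
      [/\ forall v, v \in a1 :: p1 -> v \in a2 :: p2 -> v = c,
          forall v, v \in a1 :: p1 -> v \in a3 :: p3 -> v = c &
          forall v, v \in a2 :: p2 -> v \in a3 :: p3 -> v = c]].
Proof.
move=> /forallP conn hx hy hz.
have cxy : connect (adj ER) x y.
  by have /implyP/(_ hx)/forallP/(_ y)/implyP/(_ hy) := conn x.
have czx : connect (adj ER) z x.
  by have /implyP/(_ hz)/forallP/(_ x)/implyP/(_ hx) := conn z.
case/connectP: cxy => p0 hp0 ->.
case/shortenP: hp0 => p hp up _.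
case/connectP: czx => q0 hq0 lq0.
have lx : (mem (x :: p)) (last z q0) by rewrite -lq0 /= inE eqxx.
have [q3 [hq3 l3 fh]] := first_hit hq0 lx.
case/shortenP: hq3 l3 fh => q hq uq sq l3 fh.
set c := last z q in l3 fh.
have cp : c \in x :: p by exact: l3.
case/splitPl: cp up hp fh => p1 p2 l1.
rewrite -cat_cons cat_uniq => /and3P[u1 nh u2].
rewrite cat_path => /andP[hp1 hp2].
move=> fh; rewrite last_cat l1.
have dis12 : forall v, v \in x :: p1 -> v \in c :: p2 -> v = c.
  move=> v h1; rewrite inE => /orP[/eqP //|h2].
  by move/hasPn: nh => /(_ v h2); rewrite h1.
have sub1 : forall v, v \in x :: p1 -> v \in x :: (p1 ++ p2).
  by move=> v; rewrite !inE mem_cat => /orP[->|->]; rewrite ?orbT.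
have sub2 : forall v, v \in c :: p2 -> v \in x :: (p1 ++ p2).
  move=> v; rewrite inE => /orP[/eqP->|h]; last by rewrite inE mem_cat h !orbT.
  by rewrite -l1 -cat_cons mem_cat mem_last.
have sub3 : forall v, v \in z :: q -> v \in z :: q3.
  by move=> v; rewrite !inE => /orP[->//|/sq ->]; rewrite orbT.
exists c, x, p1, c, p2, z, q; split.
- split => //; right; split=> //.
- split; [by rewrite -l1 | | by left].
  rewrite /= u2 andbT; apply/negP => hc.
  by move/hasPn: nh => /(_ _ hc); rewrite -l1 mem_last.
- by split => //; right.
- split.
  + exact: dis12.
  + by move=> v /sub1 h1 /sub3 h3; apply: fh.
  + by move=> v /sub2 h1 /sub3 h3; apply: fh.
Qed.


Section Graph.
Variables (E : {set {set T}}) (w : {set T} -> R).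
Hypothesis simpleE : simple_edges E.
Hypothesis posE : pos_weight E w.
Implicit Types (ER : {set {set T}}) (VR : {set T}) (a c x y z v : T) (p : seq T).

Definition okg (G : {set T} * {set {set T}}) :=
  is_subgraph E G.1 G.2 && sg_connected G.1 G.2.
Definition gU (G1 G2 : {set T} * {set {set T}}) := (G1.1 :|: G2.1, G1.2 :|: G2.2).
Definition wt (G : {set T} * {set {set T}}) := sg_weight w G.2.
Definition lg a p := (lv a p, pedges a p).

Lemma posE' e : e \in E -> 0 < w e.
Proof. by move=> he; move/forallP: posE => /(_ e); rewrite he. Qed.

Lemma simpleE' e : e \in E -> #|e| = 2%N.
Proof. by move=> he; move/forallP: simpleE => /(_ e); rewrite he => /eqP. Qed.

Lemma okg_sub G : okg G -> G.2 \subset E.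
Proof. by case/andP => /andP[]. Qed.

Lemma conn_of G x y : okg G -> x \in G.1 -> y \in G.1 -> connect (adj G.2) x y.
Proof.
case/andP => _ /forallP /(_ x) /implyP h hx hy.
by move: (h hx) => /forallP /(_ y) /implyP; apply.
Qed.

Lemma okU G1 G2 v : okg G1 -> okg G2 -> v \in G1.1 -> v \in G2.1 -> okg (gU G1 G2).
Proof.
move=> o1 o2 v1 v2; apply/andP; split.
  case/andP: o1 => /andP[s1 f1] _; case/andP: o2 => /andP[s2 f2] _.
  apply/andP; split; first by rewrite subUset s1 s2.
  apply/forallP => e; apply/implyP; rewrite in_setU => /orP[he|he].
    move/forallP: f1 => /(_ e); rewrite he /= => h.
    by apply: (subset_trans h); apply: subsetUl.
  move/forallP: f2 => /(_ e); rewrite he /= => h.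
  by apply: (subset_trans h); apply: subsetUr.
have l1 : forall x y, x \in G1.1 -> y \in G1.1 -> connect (adj (gU G1 G2).2) x y.
  by move=> x y hx hy; apply: (conn_mono (subsetUl _ _)); apply: conn_of.
have l2 : forall x y, x \in G2.1 -> y \in G2.1 -> connect (adj (gU G1 G2).2) x y.
  by move=> x y hx hy; apply: (conn_mono (subsetUr _ _)); apply: conn_of.
apply/forallP => x; apply/implyP; rewrite in_setU => hx.
apply/forallP => y; apply/implyP; rewrite in_setU => hy.
case/orP: hx => hx; case/orP: hy => hy; auto.
  by apply: (connect_trans (l1 _ _ hx v1)); apply: l2.
by apply: (connect_trans (l2 _ _ hx v2)); apply: l1.
Qed.

Lemma wtU G1 G2 : okg G2 -> wt (gU G1 G2) <= wt G1 + wt G2.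
Proof.
move=> /okg_sub s2; apply: sgw_U => e he.
by apply: ltW; apply: posE'; apply: (subsetP s2).
Qed.

Lemma steiner_le S d G : steiner_dist E w S d -> okg G -> S \subset G.1 -> d <= wt G.
Proof. by move=> [_ h] /andP[h1 h2] hS; exact: (h _ _ h1 h2 hS). Qed.

Lemma leg_ok ER c x a p : ER \subset E -> leg ER c x a p ->
  [/\ okg (lg a p), c \in lv a p, x \in lv a p & pedges a p \subset ER].
Proof.
move=> sE [hp up hend].
have sub : pedges a p \subset ER by apply: pedges_sub hp.
have hc : c \in lv a p /\ x \in lv a p.
  by rewrite /lv !in_set; case: hend => -[-> <-]; rewrite mem_last mem_head.
case: hc => hc hx; split => //.
apply/andP; split; last exact: lv_conn.
apply/andP; split; first exact: (subset_trans sub).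
by apply/forallP => e; apply/implyP => he; apply: pedges_in.
Qed.

Lemma legs_disj ER c a1 p1 a2 p2 : ER \subset E ->
  path (adj ER) a1 p1 ->
  (forall v, v \in a1 :: p1 -> v \in a2 :: p2 -> v = c) ->
  [disjoint pedges a1 p1 & pedges a2 p2].
Proof.
move=> sE hp dis; apply/pred0P => e /=; apply/negP => /andP[h1 h2].
have eE : e \in E by apply: (subsetP sE); apply: (subsetP (pedges_sub hp)).
have := simpleE' eE.
have : e \subset [set c].
  apply/subsetP => v hv; rewrite inE; apply/eqP; apply: dis.
    by have := subsetP (pedges_in h1) v hv; rewrite inE.
  by have := subsetP (pedges_in h2) v hv; rewrite inE.
move/subset_leq_card; rewrite cards1 => h he.
by rewrite he in h.
Qed.

Lemma legs_weight ER c a1 p1 a2 p2 a3 p3 : ER \subset E ->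
  path (adj ER) a1 p1 -> path (adj ER) a2 p2 -> path (adj ER) a3 p3 ->
  (forall v, v \in a1 :: p1 -> v \in a2 :: p2 -> v = c) ->
  (forall v, v \in a1 :: p1 -> v \in a3 :: p3 -> v = c) ->
  (forall v, v \in a2 :: p2 -> v \in a3 :: p3 -> v = c) ->
  wt (lg a1 p1) + wt (lg a2 p2) + wt (lg a3 p3) =
    sg_weight w (pedges a1 p1 :|: pedges a2 p2 :|: pedges a3 p3).
Proof.
move=> sE h1 h2 h3 d12 d13 d23.
rewrite /wt /= sgw_disj; last first.
  rewrite disjoint_sym; apply/pred0P => e /=; apply/negP => /andP[he].
  rewrite in_setU => /orP[h|h].
    by move: (legs_disj sE h1 d13) => /pred0P /(_ e) /=; rewrite h he.
  by move: (legs_disj sE h2 d23) => /pred0P /(_ e) /=; rewrite h he.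
by rewrite sgw_disj // (legs_disj sE h1 d12).
Qed.

Lemma legs_le ER c a1 p1 a2 p2 a3 p3 : ER \subset E ->
  path (adj ER) a1 p1 -> path (adj ER) a2 p2 -> path (adj ER) a3 p3 ->
  (forall v, v \in a1 :: p1 -> v \in a2 :: p2 -> v = c) ->
  (forall v, v \in a1 :: p1 -> v \in a3 :: p3 -> v = c) ->
  (forall v, v \in a2 :: p2 -> v \in a3 :: p3 -> v = c) ->
  wt (lg a1 p1) + wt (lg a2 p2) + wt (lg a3 p3) <= sg_weight w ER.
Proof.
move=> sE h1 h2 h3 d12 d13 d23; rewrite (legs_weight sE h1 h2 h3 d12 d13 d23).
apply: sgw_sub; last by move=> e he; apply/ltW/posE'; apply: (subsetP sE).
by rewrite !subUset !pedges_sub.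
Qed.

Lemma leg_pos ER c x a p : ER \subset E -> leg ER c x a p -> c != x -> 0 < wt (lg a p).
Proof.
move=> sE [hp up hend] cx.
case: p hp up hend => [|b p] hp up hend.
  by move: cx; case: hend => -[/= -> ->]; rewrite eqxx.
rewrite /wt /=; apply: (@sgw_pos _ _ _ _ [set a; b]); first by rewrite in_setU1 eqxx.
  apply: posE'; apply: (subsetP sE); by case/andP: hp.
move=> e he; apply/ltW/posE'; apply: (subsetP sE).
by apply: (subsetP (pedges_sub hp)).
Qed.

Lemma leg_lip ER c x a p (phi : T -> R) : ER \subset E ->
  (forall u v, [set u; v] \in E -> phi v - phi u <= w [set u; v]) ->
  leg ER c x a p -> phi c - phi x <= wt (lg a p) /\ phi x - phi c <= wt (lg a p).
Proof.
move=> sE lip [hp up hend]; rewrite /wt /= pw_weight //.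
have [l1 l2] := pw_lip lip sE hp.
by case: hend => -[<- <-]; split.
Qed.

Lemma lower3 VR ER x y z d (px py pz : T -> R) :
  is_subgraph E VR ER -> sg_connected VR ER ->
  x \in VR -> y \in VR -> z \in VR ->
  (forall u v, [set u; v] \in E -> px v - px u <= w [set u; v]) ->
  (forall u v, [set u; v] \in E -> py v - py u <= w [set u; v]) ->
  (forall u v, [set u; v] \in E -> pz v - pz u <= w [set u; v]) ->
  (forall c, d <= (px c - px x) + (py c - py y) + (pz c - pz z)) ->
  d <= sg_weight w ER.
Proof.
move=> /andP[sE _] conn hx hy hz lx ly lz hc.
have [c [a1 [p1 [a2 [p2 [a3 [p3 [g1 g2 g3 [d12 d13 d23]]]]]]]]] := tripod conn hx hy hz.
have := legs_le sE (let: And3 h _ _ := g1 in h) (let: And3 h _ _ := g2 in h) (let: And3 h _ _ := g3 in h) d12 d13 d23.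
have [e1 _] := leg_lip sE lx g1.
have [e2 _] := leg_lip sE ly g2.
have [e3 _] := leg_lip sE lz g3.
have := hc c; lra.
Qed.

End Graph.

Section Nec.
Variables (E : {set {set T}}) (w : {set T} -> R).
Hypothesis simpleE : simple_edges E.
Hypothesis posE : pos_weight E w.
Implicit Types (G : {set T} * {set {set T}}) (a c x y z v : T).

Definition legG G c x := [/\ okg E G, c \in G.1 & x \in G.1].

Lemma tree3 x y z D : steiner_dist E w [set x; y; z] D ->
  exists c G1 G2 G3, [/\ legG G1 c x, legG G2 c y, legG G3 c z,
    wt w G1 + wt w G2 + wt w G3 <= D &
    [/\ c != x -> 0 < wt w G1, c != y -> 0 < wt w G2 & c != z -> 0 < wt w G3]].
Proof.
case=> -[VR [ER [hs hc hS <-]]] _.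
have hx : x \in VR by apply: (subsetP hS); rewrite !inE eqxx.
have hy : y \in VR by apply: (subsetP hS); rewrite !inE eqxx orbT.
have hz : z \in VR by apply: (subsetP hS); rewrite !inE eqxx !orbT.
have [c [a1 [p1 [a2 [p2 [a3 [p3 [g1 g2 g3 [d12 d13 d23]]]]]]]]] := tripod hc hx hy hz.
have sE : ER \subset E by case/andP: hs.
have [o1 c1 x1 _] := leg_ok sE g1.
have [o2 c2 x2 _] := leg_ok sE g2.
have [o3 c3 x3 _] := leg_ok sE g3.
exists c, (lg a1 p1), (lg a2 p2), (lg a3 p3); split => //.
- exact: (legs_le simpleE posE sE (let: And3 h _ _ := g1 in h) (let: And3 h _ _ := g2 in h) (let: And3 h _ _ := g3 in h) d12 d13 d23).
- have := leg_pos posE sE g1; have := leg_pos posE sE g2; have := leg_pos posE sE g3.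
  by move=> h3 h2 h1; split.
Qed.

Lemma memUl G1 G2 v : v \in G1.1 -> v \in (gU G1 G2).1.
Proof. by move=> h; rewrite /= in_setU h. Qed.
Lemma memUr G1 G2 v : v \in G2.1 -> v \in (gU G1 G2).1.
Proof. by move=> h; rewrite /= in_setU h orbT. Qed.

Lemma okU' G1 G2 v : okg E G1 -> okg E G2 -> v \in G1.1 -> v \in G2.1 ->
  okg E (gU G1 G2) /\ wt w (gU G1 G2) <= wt w G1 + wt w G2.
Proof. move=> o1 o2 h1 h2; split; first exact: okU o1 o2 h1 h2. exact (wtU posE G1 o2). Qed.


Lemma wt_ge0 G : okg E G -> 0 <= wt w G.
Proof.
move=> /okg_sub s; apply: sumr_ge0 => e he; apply/ltW/(posE' posE).
exact: (subsetP s).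
Qed.

Lemma sub3 x y z (V : {set T}) : x \in V -> y \in V -> z \in V -> [set x; y; z] \subset V.
Proof. by move=> hx hy hz; apply/subsetP => u; rewrite !inE -orbA => /or3P[]/eqP->. Qed.

Lemma nec_i I J K Tt S Dk Dj Di :
  steiner_dist E w [set I; J; K] S -> steiner_dist E w [set I; J; Tt] Dk ->
  steiner_dist E w [set I; K; Tt] Dj -> steiner_dist E w [set J; K; Tt] Di ->
  5 * S <= 3 * Dk + 3 * Dj + 2 * Di.
Proof.
move=> hS hA hB hC.
have [a [Ai [Aj [At [[oAi aAi iAi] [oAj aAj jAj] [oAt aAt tAt] wA _]]]]] := tree3 hA.
have [b [Bi [Bk [Bt [[oBi bBi iBi] [oBk bBk kBk] [oBt bBt tBt] wB _]]]]] := tree3 hB.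
have [c [Cj [Ck [Ct [[oCj cCj jCj] [oCk cCk kCk] [oCt cCt tCt] wC _]]]]] := tree3 hC.
have [o1 w1] := okU' oAi oAj aAi aAj.
have [o2 w2] := okU' o1 oBi (memUl _ iAi) iBi.
have [o3 w3] := okU' o2 oBk (memUr _ bBi) bBk.
have s1 := steiner_le hS o3 (sub3 (memUl _ (memUl _ (memUl _ iAi))) (memUl _ (memUl _ (memUr _ jAj))) (memUr _ kBk)).
have [o4 w4] := okU' o1 oAt (memUl _ aAi) aAt.
have [o5 w5] := okU' o4 oBt (memUr _ tAt) tBt.
have [o6 w6] := okU' o5 oBk (memUr _ bBt) bBk.
have s2 := steiner_le hS o6 (sub3 (memUl _ (memUl _ (memUl _ (memUl _ iAi)))) (memUl _ (memUl _ (memUl _ (memUr _ jAj)))) (memUr _ kBk)).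
have [o7 w7] := okU' oAi oAt aAi aAt.
have [o8 w8] := okU' o7 oCt (memUr _ tAt) tCt.
have [o9 w9] := okU' o8 oCj (memUr _ cCt) cCj.
have [o10 w10] := okU' o9 oCk (memUr _ cCj) cCk.
have s3 := steiner_le hS o10 (sub3 (memUl _ (memUl _ (memUl _ (memUl _ iAi)))) (memUl _ (memUr _ jCj)) (memUr _ kCk)).
have [o11 w11] := okU' oAj oAt aAj aAt.
have [o12 w12] := okU' o11 oBt (memUr _ tAt) tBt.
have [o13 w13] := okU' o12 oBi (memUr _ bBt) bBi.
have [o14 w14] := okU' o13 oBk (memUr _ bBi) bBk.
have s4 := steiner_le hS o14 (sub3 (memUl _ (memUr _ iBi)) (memUl _ (memUl _ (memUl _ (memUl _ jAj)))) (memUr _ kBk)).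
have [o15 w15] := okU' oBi oBt bBi bBt.
have [o16 w16] := okU' o15 oCt (memUr _ tBt) tCt.
have [o17 w17] := okU' o16 oCj (memUr _ cCt) cCj.
have [o18 w18] := okU' o17 oCk (memUr _ cCj) cCk.
have s5 := steiner_le hS o18 (sub3 (memUl _ (memUl _ (memUl _ (memUl _ iBi)))) (memUl _ (memUr _ jCj)) (memUr _ kCk)).
lra.
Qed.

Lemma nec_ii I J K Tt Di Dk Dj : I != Tt ->
  steiner_dist E w [set J; K; Tt] Di -> steiner_dist E w [set I; J; Tt] Dk ->
  steiner_dist E w [set I; K; Tt] Dj -> Di < Dk + Dj.
Proof.
move=> IT hS hA hB.
have [a [Ai [Aj [At [[oAi aAi iAi] [oAj aAj jAj] [oAt aAt tAt] wA [pAi _ _]]]]]] := tree3 hA.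
have [b [Bi [Bk [Bt [[oBi bBi iBi] [oBk bBk kBk] [oBt bBt tBt] wB [pBi _ pBt]]]]]] := tree3 hB.
have gAi := wt_ge0 oAi; have gAj := wt_ge0 oAj; have gAt := wt_ge0 oAt.
have gBi := wt_ge0 oBi; have gBk := wt_ge0 oBk; have gBt := wt_ge0 oBt.
have [o1 w1] := okU' oAj oAt aAj aAt.
have [o2 w2] := okU' o1 oBt (memUr _ tAt) tBt.
have [o3 w3] := okU' o2 oBk (memUr _ bBt) bBk.
have s1 := steiner_le hS o3 (sub3 (memUl _ (memUl _ (memUl _ jAj))) (memUr _ kBk) (memUl _ (memUr _ tBt))).
case: (eqVneq a I) => [aI|aI]; last by have := pAi aI; lra.
case: (eqVneq b I) => [bI|bI]; last by have := pBi bI; lra.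
have bT : b != Tt by rewrite bI.
have := pBt bT.
have aAj' : I \in Aj.1 by rewrite -aI.
have bBk' : I \in Bk.1 by rewrite -bI.
have [o4 w4] := okU' o1 oBk (memUl _ aAj') bBk'.
have s2 := steiner_le hS o4 (sub3 (memUl _ (memUl _ jAj)) (memUr _ kBk) (memUl _ (memUr _ tAt))).
lra.
Qed.

End Nec.


Section Suff.
Variables (E : {set {set T}}) (w : {set T} -> R).
Hypothesis simpleE : simple_edges E.
Hypothesis posE : pos_weight E w.
Implicit Types (a c x y z v : T).

Lemma lg_ok a p : path (adj E) a p -> okg E (lg a p).
Proof.
move=> hp; apply/andP; split; last exact: lv_conn.
apply/andP; split; first exact: pedges_sub hp.
by apply/forallP => e; apply/implyP => he; apply: pedges_in.
Qed.

Lemma witness x y z c p1 p2 p3 d :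
  path (adj E) c p1 -> path (adj E) c p2 -> path (adj E) c p3 ->
  uniq (c :: p1) -> uniq (c :: p2) -> uniq (c :: p3) ->
  (forall v, v \in c :: p1 -> v \in c :: p2 -> v = c) ->
  (forall v, v \in c :: p1 -> v \in c :: p3 -> v = c) ->
  (forall v, v \in c :: p2 -> v \in c :: p3 -> v = c) ->
  x \in c :: p1 -> y \in c :: p2 -> z \in c :: p3 ->
  pw w c p1 + pw w c p2 + pw w c p3 = d ->
  exists VR ER, [/\ is_subgraph E VR ER, sg_connected VR ER, [set x; y; z] \subset VR
                  & sg_weight w ER = d].
Proof.
move=> h1 h2 h3 u1 u2 u3 d12 d13 d23 hx hy hz hd.
have c1 : c \in (lg c p1).1 by rewrite inE mem_head.
have c2 : c \in (lg c p2).1 by rewrite inE mem_head.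
have c3 : c \in (lg c p3).1 by rewrite inE mem_head.
have o12 := okU (lg_ok h1) (lg_ok h2) c1 c2.
have o := okU o12 (lg_ok h3) (memUl _ c1) c3.
exists (gU (gU (lg c p1) (lg c p2)) (lg c p3)).1, (gU (gU (lg c p1) (lg c p2)) (lg c p3)).2.
case/andP: o => o1 o2; split => //.
  apply: sub3.
  - by apply: memUl; apply: memUl; rewrite inE.
  - by apply: memUl; apply: memUr; rewrite inE.
  - by apply: memUr; rewrite inE.
rewrite -hd -(pw_weight w u1) -(pw_weight w u2) -(pw_weight w u3) /=.
by rewrite -(legs_weight w simpleE (subxx E) h1 h2 h3 d12 d13 d23).
Qed.

End Suff.

Section Mk.
Variables (g : rel T) (W : T -> T -> R).
Hypothesis gsym : forall u v, g u v = g v u.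
Hypothesis girr : forall u, g u u = false.
Hypothesis Wsym : forall u v, W u v = W v u.
Hypothesis Wpos : forall u v, g u v -> 0 < W u v.

Definition mkE : {set {set T}} :=
  [set e : {set T} | [exists u, exists v, g u v && (e == [set u; v])]].
Definition mkw (e : {set T}) : R :=
  (\sum_(u in e) \sum_(v in e) (if g u v then W u v else 0)) / 2.

Lemma mkE_mem u v : g u v -> [set u; v] \in mkE.
Proof.
by move=> h; rewrite inE; apply/existsP; exists u; apply/existsP; exists v; rewrite h eqxx.
Qed.

Lemma mkE_inv e : e \in mkE -> exists u v, g u v /\ e = [set u; v].
Proof.
by rewrite inE => /existsP[u /existsP[v /andP[h /eqP ->]]]; exists u, v.
Qed.

Lemma set2_eq (u v u' v' : T) : [set u; v] = [set u'; v'] ->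
  (u = u' /\ v = v') \/ (u = v' /\ v = u').
Proof.
move=> e.
have hu : u \in [set u'; v'] by rewrite -e !inE eqxx.
have hv : v \in [set u'; v'] by rewrite -e !inE eqxx orbT.
have hu' : u' \in [set u; v] by rewrite e !inE eqxx.
have hv' : v' \in [set u; v] by rewrite e !inE eqxx orbT.
move: hu hv hu' hv'; rewrite !inE => hu hv hu' hv'.
case/orP: hu => /eqP eu.
  left; split => //; subst u'.
  case/orP: hv => /eqP ev //; subst v.
  by case/orP: hv' => /eqP.
right; split => //; subst v'.
case/orP: hv => /eqP ev //; subst v.
by case/orP: hu' => /eqP.
Qed.

Lemma mkw2 u v : g u v -> mkw [set u; v] = W u v.
Proof.
move=> h; have uv : u != v by apply/eqP => e; rewrite e girr in h.
have nuv : u \notin [set v] by rewrite inE.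
rewrite /mkw big_setU1 // big_set1 /= !big_setU1 // !big_set1.
rewrite !girr h -gsym h Wsym.
rewrite -[X in X = _]/((0 + W v u + (W v u + 0)) / 2); lra.
Qed.

Lemma mk_simple : simple_edges mkE.
Proof.
apply/forallP => e; apply/implyP => /mkE_inv [u [v [h ->]]].
have uv : u != v by apply/eqP => e'; rewrite e' girr in h.
by rewrite cards2 uv.
Qed.

Lemma mk_pos : pos_weight mkE mkw.
Proof.
apply/forallP => e; apply/implyP => /mkE_inv [u [v [h ->]]].
by rewrite mkw2 // Wpos.
Qed.

Lemma mk_lip (phi : T -> R) : (forall u v, g u v -> phi v - phi u <= W u v) ->
  forall u v, [set u; v] \in mkE -> phi v - phi u <= mkw [set u; v].
Proof.
move=> lip u v /mkE_inv [u' [v' [h e]]].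
have huv : g u v by case: (set2_eq e) => -[-> ->] //; rewrite gsym.
by rewrite mkw2 // lip.
Qed.

Lemma mk_adj u v : g u v -> adj mkE u v.
Proof. exact: mkE_mem. Qed.

Lemma mk_path a p : path g a p -> path (adj mkE) a p.
Proof. by apply: sub_path => u v; apply: mk_adj. Qed.

Fixpoint pW a p : R := if p is b :: p' then W a b + pW b p' else 0.

Lemma mk_pw a p : path g a p -> pw mkw a p = pW a p.
Proof.
elim: p a => [|b p IH] a //= /andP[h hp].
by rewrite mkw2 // IH.
Qed.

End Mk.

Lemma mk_steiner (g : rel T) (W : T -> T -> R)
  (gsym : forall u v, g u v = g v u) (girr : forall u, g u u = false)
  (Wsym : forall u v, W u v = W v u) (Wpos : forall u v, g u v -> 0 < W u v)
  x y z d c p1 p2 p3 (px py pz : T -> R) :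
  path g c p1 -> path g c p2 -> path g c p3 ->
  uniq (c :: p1) -> uniq (c :: p2) -> uniq (c :: p3) ->
  (forall v, v \in c :: p1 -> v \in c :: p2 -> v = c) ->
  (forall v, v \in c :: p1 -> v \in c :: p3 -> v = c) ->
  (forall v, v \in c :: p2 -> v \in c :: p3 -> v = c) ->
  x \in c :: p1 -> y \in c :: p2 -> z \in c :: p3 ->
  pW W c p1 + pW W c p2 + pW W c p3 = d ->
  (forall u v, g u v -> px v - px u <= W u v) ->
  (forall u v, g u v -> py v - py u <= W u v) ->
  (forall u v, g u v -> pz v - pz u <= W u v) ->
  (forall c', d <= (px c' - px x) + (py c' - py y) + (pz c' - pz z)) ->
  steiner_dist (mkE g) (mkw g W) [set x; y; z] d.
Proof.
move=> h1 h2 h3 u1 u2 u3 d12 d13 d23 hx hy hz hd lx ly lz hc.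
have sE := mk_simple girr.
have pE := mk_pos gsym girr Wsym Wpos.
split.
  apply: (witness sE (mk_path h1) (mk_path h2) (mk_path h3) u1 u2 u3 d12 d13 d23 hx hy hz).
  by rewrite !(mk_pw gsym girr Wsym).
move=> VR ER hs hcn hS.
have hx' : x \in VR by apply: (subsetP hS); rewrite !inE eqxx.
have hy' : y \in VR by apply: (subsetP hS); rewrite !inE eqxx orbT.
have hz' : z \in VR by apply: (subsetP hS); rewrite !inE eqxx !orbT.
exact: (lower3 sE pE hs hcn hx' hy' hz' (mk_lip gsym girr Wsym lx) (mk_lip gsym girr Wsym ly) (mk_lip gsym girr Wsym lz) hc).
Qed.


Section Star.
Variables (h : T) (A : T -> R).
Hypothesis A0 : A h = 0.
Hypothesis Age : forall v, 0 <= A v.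
Hypothesis Agt : forall v, v != h -> 0 < A v.

Definition sg : rel T := fun u v => (u != v) && ((u == h) || (v == h)).
Definition sW (u v : T) : R := A u + A v.
Definition sd (u v : T) : R := if u == v then 0 else A u + A v.
Definition lp (x : T) : seq T := if x == h then [::] else [:: x].

Lemma sg_sym u v : sg u v = sg v u.
Proof. by rewrite /sg eq_sym orbC. Qed.
Lemma sg_irr u : sg u u = false.
Proof. by rewrite /sg eqxx. Qed.
Lemma sW_sym u v : sW u v = sW v u.
Proof. by rewrite /sW addrC. Qed.
Lemma sW_pos u v : sg u v -> 0 < sW u v.
Proof.
rewrite /sg /sW => /andP[uv /orP[/eqP e|/eqP e]]; subst.
  by have := Age h; have := Agt (v := v); rewrite eq_sym uv => /(_ isT); lra.
by have := Age h; have := Agt (v := u); rewrite uv => /(_ isT); lra.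
Qed.

Lemma lp_path x : path sg h (lp x).
Proof. by rewrite /lp; case: eqVneq => [//|xh]; rewrite /= /sg eq_sym xh eqxx. Qed.
Lemma lp_uniq x : uniq (h :: lp x).
Proof. by rewrite /lp; case: eqVneq => [//|xh]; rewrite /= inE eq_sym xh. Qed.
Lemma lp_mem x : x \in h :: lp x.
Proof. by rewrite /lp; case: eqVneq => [->|xh]; rewrite !inE eqxx ?orbT. Qed.
Lemma lp_in x v : v \in h :: lp x -> v = h \/ v = x.
Proof.
rewrite /lp; case: eqVneq => [_|xh]; rewrite !inE.
  by move/eqP; left.
by case/orP => /eqP; [left|right].
Qed.
Lemma lp_dis x y : x != y -> forall v, v \in h :: lp x -> v \in h :: lp y -> v = h.
Proof.
move=> xy v /lp_in [//|->] /lp_in [//|e].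
by rewrite e eqxx in xy.
Qed.
Lemma lp_pW x : pW sW h (lp x) = A x.
Proof. by rewrite /lp; case: eqVneq => [->|xh] /=; rewrite /sW ?A0; lra. Qed.

Lemma sd_lip x u v : sd x v - sd x u <= sW u v.
Proof.
have := Age x; have := Age u; have := Age v.
rewrite /sd /sW; case: (eqVneq x v) => [<-|xv]; case: (eqVneq x u) => [<-|xu]; lra.
Qed.

Lemma star_steiner x y z : x != y -> x != z -> y != z ->
  steiner_dist (mkE sg) (mkw sg sW) [set x; y; z] (A x + A y + A z).
Proof.
move=> xy xz yz.
apply: (mk_steiner (px := sd x) (py := sd y) (pz := sd z) sg_sym sg_irr sW_sym sW_pos (lp_path x) (lp_path y) (lp_path z)
  (lp_uniq x) (lp_uniq y) (lp_uniq z) (lp_dis xy) (lp_dis xz) (lp_dis yz)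
  (lp_mem x) (lp_mem y) (lp_mem z) _ (fun u v _ => sd_lip x u v)
  (fun u v _ => sd_lip y u v) (fun u v _ => sd_lip z u v)).
  by rewrite !lp_pW.
move=> c; have := Age x; have := Age y; have := Age z; have := Age c.
rewrite /sd !eqxx; case: (eqVneq x c) => e1; case: (eqVneq y c) => e2;
  case: (eqVneq z c) => e3; subst;
  (try by rewrite eqxx in xy); (try by rewrite eqxx in xz); (try by rewrite eqxx in yz); lra.
Qed.

End Star.
End Paths.

Section Gadget.
Variable R : realType.
Variables (a0 a1 a2 b : R).
Hypotheses (ha0 : 0 < a0) (ha1 : 0 < a1) (ha2 : 0 < a2) (hb : 0 < b).
Hypotheses (hb0 : 2 * b <= a0) (hb1 : 2 * b <= a1) (hb2 : 2 * b <= a2).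

Definition al (n : nat) : R := match n with 0 => a0 | 1 => a1 | 2 => a2 | _ => 0 end.
Definition dd (u v : nat) : R :=
  if u == v then 0
  else if (u < 3)%N && (v < 3)%N then al u + al v
  else if (u < 3)%N && (v == 3)%N then al u + b
  else if (v < 3)%N && (u == 3)%N then al v + b
  else if (u < 3)%N then (if v == (u + 4)%N then al u + 2 * b else al u)
  else if (v < 3)%N then (if u == (v + 4)%N then al v + 2 * b else al v)
  else if (u == 3)%N || (v == 3)%N then b
  else 2 * b.
Definition gn (u v : nat) : bool :=
  (u, v) \in [:: (0,5);(0,6);(1,4);(1,6);(2,4);(2,5);(3,4);(3,5);(3,6)]%N.
Definition gg : rel 'I_7 := fun u v => gn u v || gn v u.
Definition gW (u v : 'I_7) : R := dd u v.

Lemma gg_sym u v : gg u v = gg v u.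
Proof. by rewrite /gg orbC. Qed.
Lemma gg_irr u : gg u u = false.
Proof. by case: u => [[|[|[|[|[|[|[|?]]]]]]] ?]. Qed.
Lemma gW_sym u v : gW u v = gW v u.
Proof.
case: u => [[|[|[|[|[|[|[|?]]]]]]] ?] //; case: v => [[|[|[|[|[|[|[|?]]]]]]] ?] //;
  rewrite /gW /dd /=; lra.
Qed.
Lemma gW_pos u v : gg u v -> 0 < gW u v.
Proof.
case: u => [[|[|[|[|[|[|[|?]]]]]]] ?] //; case: v => [[|[|[|[|[|[|[|?]]]]]]] ?] //;
  rewrite /gg /gn /= => // _; rewrite /gW /dd /=; lra.
Qed.

Ltac glra := have := ha0; have := ha1; have := ha2; have := hb; have := hb0; have := hb1; have := hb2; lra.

Lemma gg_lip (x : nat) : (x <= 3)%N -> forall u v, gg u v -> dd x v - dd x u <= gW u v.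
Proof.
case: x => [|[|[|[|?]]]] // _;
case=> [[|[|[|[|[|[|[|?]]]]]]] ?] //; case=> [[|[|[|[|[|[|[|?]]]]]]] ?] //;
  rewrite /gg /gn /= => // _; rewrite /gW /dd /=; glra.
Qed.

Definition w0 : 'I_7 := @Ordinal 7 0 isT.
Definition w1 : 'I_7 := @Ordinal 7 1 isT.
Definition w2 : 'I_7 := @Ordinal 7 2 isT.
Definition w3 : 'I_7 := @Ordinal 7 3 isT.
Definition w4 : 'I_7 := @Ordinal 7 4 isT.
Definition w5 : 'I_7 := @Ordinal 7 5 isT.
Definition w6 : 'I_7 := @Ordinal 7 6 isT.

Ltac dis7 := let v := fresh "v" in move=> v; case: v => [[|[|[|[|[|[|[|?]]]]]]] ?] //= _ _; exact: val_inj.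
Ltac sum7 := let v := fresh "v" in move=> v; case: v => [[|[|[|[|[|[|[|?]]]]]]] ?] //; rewrite /dd /=; glra.

Lemma gad3 : steiner_dist (mkE gg) (mkw gg gW) [set w0; w1; w2] (a0 + a1 + a2 + 2 * b).
Proof.
apply: (mk_steiner (px := fun v => dd 0 v) (py := fun v => dd 1 v) (pz := fun v => dd 2 v)
   (c := w6) (p1 := [:: w0]) (p2 := [:: w1]) (p3 := [:: w3; w4; w2])
   gg_sym gg_irr gW_sym gW_pos) => //; try dis7.
- by rewrite /= /gW /dd /=; glra.
- exact: (gg_lip (x := 0)).
- exact: (gg_lip (x := 1)).
- exact: (gg_lip (x := 2)).
- sum7.
Qed.

Lemma gad2 : steiner_dist (mkE gg) (mkw gg gW) [set w0; w1; w3] (a0 + a1 + b).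
Proof.
apply: (mk_steiner (px := fun v => dd 0 v) (py := fun v => dd 1 v) (pz := fun v => dd 3 v)
   (c := w6) (p1 := [:: w0]) (p2 := [:: w1]) (p3 := [:: w3])
   gg_sym gg_irr gW_sym gW_pos) => //; try dis7.
- by rewrite /= /gW /dd /=; glra.
- exact: (gg_lip (x := 0)).
- exact: (gg_lip (x := 1)).
- exact: (gg_lip (x := 3)).
- sum7.
Qed.

Lemma gad1 : steiner_dist (mkE gg) (mkw gg gW) [set w0; w2; w3] (a0 + a2 + b).
Proof.
apply: (mk_steiner (px := fun v => dd 0 v) (py := fun v => dd 2 v) (pz := fun v => dd 3 v)
   (c := w5) (p1 := [:: w0]) (p2 := [:: w2]) (p3 := [:: w3])
   gg_sym gg_irr gW_sym gW_pos) => //; try dis7.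
- by rewrite /= /gW /dd /=; glra.
- exact: (gg_lip (x := 0)).
- exact: (gg_lip (x := 2)).
- exact: (gg_lip (x := 3)).
- sum7.
Qed.

Lemma gad0 : steiner_dist (mkE gg) (mkw gg gW) [set w1; w2; w3] (a1 + a2 + b).
Proof.
apply: (mk_steiner (px := fun v => dd 1 v) (py := fun v => dd 2 v) (pz := fun v => dd 3 v)
   (c := w4) (p1 := [:: w1]) (p2 := [:: w2]) (p3 := [:: w3])
   gg_sym gg_irr gW_sym gW_pos) => //; try dis7.
- by rewrite /= /gW /dd /=; glra.
- exact: (gg_lip (x := 1)).
- exact: (gg_lip (x := 2)).
- exact: (gg_lip (x := 3)).
- sum7.
Qed.

End Gadget.

Definition o0 : 'I_4 := @Ordinal 4 0 isT.
Definition o1 : 'I_4 := @Ordinal 4 1 isT.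
Definition o2 : 'I_4 := @Ordinal 4 2 isT.
Definition o3 : 'I_4 := @Ordinal 4 3 isT.

Lemma ord4_cases (i : 'I_4) : [\/ i = o0, i = o1, i = o2 | i = o3].
Proof.
case: i => [[|[|[|[|?]]]] H] //.
- by constructor 1; apply: val_inj.
- by constructor 2; apply: val_inj.
- by constructor 3; apply: val_inj.
- by constructor 4; apply: val_inj.
Qed.

Lemma card3 (U : finType) (a b c : U) : a != b -> a != c -> b != c -> #|[set a; b; c]| = 3%N.
Proof.
move=> ab ac bc; rewrite -setUA !cardsU1 cards1 !inE negb_or ab ac bc //.
Qed.

Lemma setC3 (i j k t : 'I_4) : i != j -> i != k -> j != k -> i != t -> j != t -> k != t ->
  [set~ t] = [set i; j; k].
Proof.
move=> ij ik jk it jt kt; apply/eqP; rewrite eq_sym eqEcard card3 // cardsC1 card_ord andbT.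
by apply/subsetP => x; rewrite !inE -orbA => /or3P[]/eqP->.
Qed.

Lemma imset3 (U V : finType) (f : U -> V) (a b c : U) :
  f @: [set a; b; c] = [set f a; f b; f c].
Proof. by rewrite -!setUA !imsetU1 imset_set1. Qed.

Lemma exists4 (i j k : 'I_4) : exists t, [/\ i != t, j != t & k != t].
Proof.
case: (pickP (fun t => t \notin [set i; j; k])) => [t|hn].
  by rewrite !inE -orbA !negb_or => /and3P[a b c]; exists t; rewrite !(eq_sym _ t).
have : (#|[set: 'I_4]| <= #|[set i; j; k]|)%N.
  apply: subset_leq_card; apply/subsetP => x _.
  by have := hn x; move/negbFE.
rewrite cardsT card_ord -setUA !cardsU1 cards1.
by case: (_ \notin _); case: (_ \notin _).
Qed.


Lemma trip (R : realType) (i : 'I_4) : exists a b c, [/\ a != b, a != c, b != c, [set~ i] = [set a; b; c] &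
  forall F : 'I_4 -> R, F a + F b + F c = F o0 + F o1 + F o2 + F o3 - F i].
Proof.
case: (ord4_cases i) => ->.
- by exists o1, o2, o3; split => //; [apply: setC3 | move=> F; lra].
- by exists o0, o2, o3; split => //; [apply: setC3 | move=> F; lra].
- by exists o0, o1, o3; split => //; [apply: setC3 | move=> F; lra].
- by exists o0, o1, o2; split => //; [apply: setC3 | move=> F; lra].
Qed.

Section Main.
Variable R : realType.

Definition realizable (D : 'I_4 -> R) :=
  exists (T : finType) (E : {set {set T}}) (w : {set T} -> R) (f : 'I_4 -> T),
      [/\ simple_edges E, pos_weight E w, injective f &
          forall i : 'I_4, steiner_dist E w (f @: [set~ i]) (D i)].

Definition condI (D : 'I_4 -> R) :=
  forall i j k t : 'I_4, i != j -> i != k -> i != t -> j != k -> j != t -> k != t ->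
      5 * D t <= 3 * D k + 3 * D j + 2 * D i.
Definition condII (D : 'I_4 -> R) :=
  forall i j k : 'I_4, i != j -> i != k -> j != k -> D i < D k + D j.

Lemma necessity D : realizable D -> condI D /\ condII D.
Proof.
case=> T [E [w [f [sE pE finj hD]]]].
have fn : forall x y, x != y -> f x != f y by move=> x y; rewrite inj_eq.
split.
  move=> i j k t ij ik it jk jt kt.
  have ji : j != i by rewrite eq_sym. have ki : k != i by rewrite eq_sym.
  have ti : t != i by rewrite eq_sym. have kj : k != j by rewrite eq_sym.
  have tj : t != j by rewrite eq_sym. have tk : t != k by rewrite eq_sym.
  have hS := hD t; rewrite (setC3 ij ik jk it jt kt) imset3 in hS.
  have hA := hD k; rewrite (setC3 ij it jt ik jk tk) imset3 in hA.
  have hB := hD j; rewrite (setC3 ik it kt ij kj tj) imset3 in hB.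
  have hC := hD i; rewrite (setC3 jk jt kt ji ki ti) imset3 in hC.
  exact: (nec_i sE pE hS hA hB hC).
move=> i j k ij ik jk.
have [t [it jt kt]] := exists4 i j k.
have ji : j != i by rewrite eq_sym. have ki : k != i by rewrite eq_sym.
have ti : t != i by rewrite eq_sym. have kj : k != j by rewrite eq_sym.
have tj : t != j by rewrite eq_sym. have tk : t != k by rewrite eq_sym.
have hC := hD i; rewrite (setC3 jk jt kt ji ki ti) imset3 in hC.
have hA := hD k; rewrite (setC3 ij it jt ik jk tk) imset3 in hA.
have hB := hD j; rewrite (setC3 ik it kt ij kj tj) imset3 in hB.
exact: (nec_ii sE pE (fn _ _ it) hC hA hB).
Qed.



Definition swap (t x : 'I_4) : 'I_4 := if x == t then o3 else if x == o3 then t else x.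

Lemma swapK t : involutive (swap t).
Proof.
move=> x; rewrite /swap.
case: (eqVneq x t) => [->|xt]; first by rewrite eqxx; case: (eqVneq o3 t) => [->|]; rewrite ?eqxx.
case: (eqVneq x o3) => [->|x3]; first by rewrite eqxx.
by rewrite (negbTE xt) (negbTE x3).
Qed.

Lemma realize_perm D (s : 'I_4 -> 'I_4) : involutive s -> realizable (D \o s) -> realizable D.
Proof.
move=> sK [T [E [w [f [sE pE finj hD]]]]].
exists T, E, w, (f \o s); split => //.
  by apply: inj_comp => //; apply: (can_inj sK).
move=> i; rewrite imset_comp (_ : s @: [set~ i] = [set~ s i]).
  by have := hD (s i); rewrite /= sK.
rewrite (can_imset_pre _ sK); apply/setP => x; rewrite !inE.
by rewrite -{1}(sK i) (inj_eq (can_inj sK)).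
Qed.

Lemma condI_perm D s : injective s -> condI D -> condI (D \o s).
Proof.
move=> sinj h i j k t ij ik it jk jt kt /=.
by apply: h; rewrite inj_eq.
Qed.

Lemma condII_perm D s : injective s -> condII D -> condII (D \o s).
Proof.
move=> sinj h i j k ij ik jk /=.
by apply: h; rewrite inj_eq.
Qed.

Lemma steiner_eq (T : finType) (E : {set {set T}}) (w : {set T} -> R) S d d' :
  steiner_dist E w S d -> d = d' -> steiner_dist E w S d'.
Proof. by move=> h <-. Qed.

Definition Sig (D : 'I_4 -> R) := D o0 + D o1 + D o2 + D o3.

Lemma suff_gadget D : condI D -> condII D -> D o0 + D o1 + D o2 < 2 * D o3 -> realizable D.
Proof.
move=> hI hII hc.
have ha0 : 0 < Sig D - 2 * D o3 - D o0 by have := hII o3 o1 o2 isT isT isT; rewrite /Sig; lra.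
have ha1 : 0 < Sig D - 2 * D o3 - D o1 by have := hII o3 o0 o2 isT isT isT; rewrite /Sig; lra.
have ha2 : 0 < Sig D - 2 * D o3 - D o2 by have := hII o3 o0 o1 isT isT isT; rewrite /Sig; lra.
have hb : 0 < 3 * D o3 - Sig D by rewrite /Sig; lra.
have hb0 : 2 * (3 * D o3 - Sig D) <= Sig D - 2 * D o3 - D o0.
  by have := hI o0 o1 o2 o3 isT isT isT isT isT isT; rewrite /Sig; lra.
have hb1 : 2 * (3 * D o3 - Sig D) <= Sig D - 2 * D o3 - D o1.
  by have := hI o1 o0 o2 o3 isT isT isT isT isT isT; rewrite /Sig; lra.
have hb2 : 2 * (3 * D o3 - Sig D) <= Sig D - 2 * D o3 - D o2.
  by have := hI o2 o0 o1 o3 isT isT isT isT isT isT; rewrite /Sig; lra.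
set f := @widen_ord 4 7 isT.
have e0 : f o0 = w0 by apply: val_inj.
have e1 : f o1 = w1 by apply: val_inj.
have e2 : f o2 = w2 by apply: val_inj.
have e3 : f o3 = w3 by apply: val_inj.
exists ('I_7 : finType), (mkE gg), (mkw gg (gW (Sig D - 2 * D o3 - D o0) (Sig D - 2 * D o3 - D o1)
   (Sig D - 2 * D o3 - D o2) (3 * D o3 - Sig D))), f; split.
- exact: mk_simple gg_irr.
- exact: (mk_pos gg_sym gg_irr (gW_sym _ _ _ _) (gW_pos ha0 ha1 ha2 hb)).
- by move=> x y /(congr1 val) /= /val_inj.
move=> i; case: (ord4_cases i) => ->.
- rewrite (@setC3 o1 o2 o3 o0) // imset3 e1 e2 e3.
  apply: steiner_eq (gad0 ha0 ha1 ha2 hb hb0 hb1 hb2) _; rewrite /Sig; lra.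
- rewrite (@setC3 o0 o2 o3 o1) // imset3 e0 e2 e3.
  apply: steiner_eq (gad1 ha0 ha1 ha2 hb hb0 hb1 hb2) _; rewrite /Sig; lra.
- rewrite (@setC3 o0 o1 o3 o2) // imset3 e0 e1 e3.
  apply: steiner_eq (gad2 ha0 ha1 ha2 hb hb0 hb1 hb2) _; rewrite /Sig; lra.
- rewrite (@setC3 o0 o1 o2 o3) // imset3 e0 e1 e2.
  apply: steiner_eq (gad3 ha0 ha1 ha2 hb hb0 hb1 hb2) _; rewrite /Sig; lra.
Qed.


Lemma suff_star5 D : (forall t, 3 * D t < Sig D) -> realizable D.
Proof.
move=> hlt.
pose A (v : 'I_5) : R := if (val v < 4)%N then Sig D / 3 - D (inord v) else 0.
set h : 'I_5 := ord_max.
have A0 : A h = 0 by rewrite /A /=.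
have Agt : forall v, v != h -> 0 < A v.
  move=> v vh; rewrite /A.
  have -> : (val v < 4)%N.
    have := ltn_ord v; rewrite ltnS leq_eqVlt => /orP[/eqP e|//].
    by move: vh; rewrite (_ : v = h) ?eqxx //; apply: val_inj.
  by have := hlt (inord v); lra.
have Age : forall v, 0 <= A v.
  by move=> v; case: (eqVneq v h) => [->|/Agt /ltW //]; rewrite A0.
set f := @widen_ord 4 5 isT.
have Af : forall a, A (f a) = Sig D / 3 - D a by move=> a; rewrite /A /= ltn_ord inord_val.
exists ('I_5 : finType), (mkE (sg h)), (mkw (sg h) (sW A)), f; split.
- exact: mk_simple (@sg_irr _ h).
- exact (mk_pos (@sg_sym _ h) (@sg_irr _ h) (sW_sym A) (sW_pos Age Agt)).
- by move=> x y /(congr1 val) /= /val_inj.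
have finj : injective f by move=> x y /(congr1 val) /= /val_inj.
move=> i; have [a [b [c [ab ac bc -> hF]]]] := trip R i.
rewrite imset3.
apply: steiner_eq (star_steiner A0 Age Agt _ _ _) _; rewrite ?(inj_eq finj) //.
by rewrite !Af; have := hF D; rewrite /Sig; lra.
Qed.

Lemma suff_star0 D t : 3 * D t = Sig D -> condII D -> realizable D.
Proof.
move=> ht hII.
pose A (v : 'I_4) : R := Sig D / 3 - D v.
have A0 : A t = 0 by rewrite /A; lra.
have Agt : forall v, v != t -> 0 < A v.
  move=> v vt; have [a [b [c [ab ac bc e hF]]]] := trip R t.
  have := hF D; rewrite /A /Sig => hs; rewrite /Sig in ht.
  have ma : a \in [set~ t] by rewrite e !inE eqxx.
  have mb : b \in [set~ t] by rewrite e !inE eqxx orbT.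
  have mc : c \in [set~ t] by rewrite e !inE eqxx !orbT.
  rewrite !inE eq_sym in ma; rewrite !inE eq_sym in mb; rewrite !inE eq_sym in mc.
  have hv : v \in [set a; b; c] by rewrite -e !inE.
  rewrite !inE -orbA in hv; case/or3P: hv => /eqP ->.
  - by have := hII t b c mb mc bc; lra.
  - by have := hII t a c ma mc ac; lra.
  - by have := hII t a b ma mb ab; lra.
have Age : forall v, 0 <= A v.
  by move=> v; case: (eqVneq v t) => [->|/Agt /ltW //]; rewrite A0.
exists ('I_4 : finType), (mkE (sg t)), (mkw (sg t) (sW A)), id; split.
- exact: mk_simple (@sg_irr _ t).
- exact (mk_pos (@sg_sym _ t) (@sg_irr _ t) (sW_sym A) (sW_pos Age Agt)).
- by [].
move=> i; have [a [b [c [ab ac bc -> hF]]]] := trip R i.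
rewrite imset_id.
apply: steiner_eq (star_steiner A0 Age Agt ab ac bc) _.
by rewrite /A; have := hF D; rewrite /Sig; lra.
Qed.


Lemma sufficiency D : condI D -> condII D -> realizable D.
Proof.
move=> hI hII.
case: (boolP [exists t, Sig D < 3 * D t]) => [/existsP [t ht]|hn].
  apply: (realize_perm (swapK t)).
  apply: suff_gadget.
  - exact: condI_perm (can_inj (swapK t)) hI.
  - exact: condII_perm (can_inj (swapK t)) hII.
  - by case: (ord4_cases t) ht => -> ht; rewrite /swap /=; rewrite /Sig in ht; lra.
case: (boolP [exists t, 3 * D t == Sig D]) => [/existsP [t /eqP ht]|hn2].
  exact: suff_star0 ht hII.
apply: suff_star5 => t.
move: hn hn2; rewrite !negb_exists => /forallP /(_ t) h1 /forallP /(_ t) h2.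
by rewrite lt_neqAle h2 leNgt h1.
Qed.

End Main.

Unset Implicit Arguments.

Theorem theorem4p2 (R : realType) (Dh : 'I_4 -> R) (Dpos : forall i, 0 < Dh i) :
  (exists (T : finType) (E : {set {set T}}) (w : {set T} -> R) (f : 'I_4 -> T),
      [/\ simple_edges E, pos_weight E w, injective f &
          forall i : 'I_4, steiner_dist E w (f @: [set~ i]) (Dh i)])
  <->
  ((forall i j k t : 'I_4, i != j -> i != k -> i != t -> j != k -> j != t -> k != t ->
      5 * Dh t <= 3 * Dh k + 3 * Dh j + 2 * Dh i) /\
   (forall i j k : 'I_4, i != j -> i != k -> j != k -> Dh i < Dh k + Dh j)).
Proof.
split; first exact: necessity.
by case=> hI hII; apply: sufficiency.
Qed.
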